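(* Let $(G,R,\omega)$ be a metric RPP instance. Let $v$ be a vertex to which vertex extraction (as defined below) is applicable, and let $R'$ be a result of extracting $v$ from $G\langle R\rangle$. Then: (i) $V(R')=V(R)\setminus\{v\}$; (ii) $\omega(R')\le\omega(R)$ and $|R'|\le|R|$; (iii) each vertex of $G\langle R'\rangle$ is balanced in $G\langle R'\rangle$ if and only if it is balanced in $G\langle R\rangle$; (iv) two vertices of $G\langle R'\rangle$ are connected in $G\langle R'\rangle$ if and only if they are connected in $G\langle R\rangle$; (v) every multiset $S$ of edges with $V(S)\subseteq V(R')$ is an Eulerian extension for $(G,R',\omega)$ if and only if it is one for $(G,R,\omega)$.
   Context: An RPP instance is a triple $(G,R,\omega)$, where $G=(V,E)$ is an undirected multigraph, $\omega\colon E\to\mathbb{N}$ assigns weights (parallel edges have equal weight), and $R$ is a nonempty multiset of edges of $G$. The instance is metric if $G$ contains an edge between any two vertices and the weights satisfy the triangle inequality $\omega(\{u,w\})\le\omega(\{u,v\})+\omega(\{v,w\})$ for all $u,v,w\in V$. For a multiset $X$ of edges: - $\omega(X)$ and $|X|$ are weight and cardinality with multiplicity; - $V(X)$ is the set of vertices incident to edges of $X$; - $G\langle X\rangle=(V(X),X)$; - $\uplus$ and $\setminus$ denote multiset sum and difference. A vertex is balanced if its degree is even (a loop counts 2). A multigraph without isolated vertices is Eulerian if it is connected and all vertices are balanced. An Eulerian extension for $(G,R,\omega)$ is a multiset $S$ of edges with $G\langle R\uplus S\rangle$ Eulerian. A block is a maximal subgraph without cut vertices. Vertex extraction. Let $v$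 be a vertex that is balanced in $G\langle R\rangle$ and lies in a connected component of $G\langle R\rangle$ with at least three vertices. Suppose moreover that $v$ is either not a cut vertex of $G\langle R\rangle$, or a cut vertex contained in exactly two blocks of $G\langle R\rangle$. Let $R_v\subseteq R$ be the required edges incident to $v$. (a) If $v$ is not a cut vertex of $G\langle R\rangle$: let $M_v$ be any perfect matching (of edges of $G$) on the set of vertices other than $v$ that are incident to an odd number of edges of $R_v$. The result is $R'=(R\setminus R_v)\uplus M_v$. (b) If $v$ is a cut vertex contained in exactly two blocks $A$ and $B$: let $a\ne v$ be a neighbor of $v$ in $A$ and $b\ne v$ a neighbor of $v$ in $B$, and let $R''=(R\setminus\{\{a,v\},\{b,v\}\})\uplus\{\{a,b\}\}$. If $v\notin V(R'')$, the result is $R''$. Otherwise $v$ is not a cut vertex of $G\langle R''\rangle$, and the result is the result of extracting $v$ from $G\langle R''\rangle$ according to (a). *)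

(* Defs.v *)
From HB Require Import structures.
From mathcomp Require Import all_boot.
Set Implicit Arguments. Unset Strict Implicit. Unset Printing Implicit Defensive.

(* The multigraph G = (V, E): V and E are finite types; each edge e has the
   (unordered) pair of endpoints given by [ends e] (a loop has equal ends).
   A multiset of edges of G is a multiplicity function {ffun E -> nat}. *)
Section RPP.
Variables (V E : finType) (ends : E -> V * V).

Definition mset := {ffun E -> nat}.

Definition incident (e : E) (x : V) : bool :=
  (x == (ends e).1) || (x == (ends e).2).

Definition links (e : E) (u w : V) : bool :=
  (ends e == (u, w)) || (ends e == (w, u)).

(* degree of x in G<X>, loops counted twice, multiplicities counted *)
Definition deg (X : mset) (x : V) : nat :=
  \sum_(e : E) X e * (((ends e).1 == x) + ((ends e).2 == x)).

Definition balanced (X : mset) (x : V) : bool := ~~ odd (deg X x).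

Definition VX (X : mset) : {set V} :=
  [set x | [exists e, (0 < X e) && incident e x]].

Definition weight (w : E -> nat) (X : mset) : nat := \sum_(e : E) X e * w e.
Definition card_ms (X : mset) : nat := \sum_(e : E) X e.

Definition msum (X Y : mset) : mset := [ffun e => X e + Y e].
Definition mdiff (X Y : mset) : mset := [ffun e => X e - Y e].
Definition single (e0 : E) : mset := [ffun e => nat_of_bool (e == e0)].
Definition sub_ms (X Y : mset) : Prop := forall e, X e <= Y e.

Definition adj (X : mset) : rel V :=
  fun x y => [exists e, (0 < X e) && links e x y].

Definition connectedX (W : {set V}) (F : mset) : Prop :=
  forall x y, x \in W -> y \in W -> connect (adj F) x y.

(* G<X> is Eulerian: connected and all vertices balanced
   (G<X> has no isolated vertices by construction) *)
Definition eulerian (X : mset) : Prop :=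
  connectedX (VX X) X /\ forall x, x \in VX X -> balanced X x.

Definition eulerian_extension (R S : mset) : Prop := eulerian (msum R S).

(* Subgraphs are pairs (W, F) of a vertex set and an edge multiset whose
   edges have both ends in W. *)
Definition rm_edges (F : mset) (x : V) : mset :=
  [ffun e => if incident e x then 0 else F e].

Definition ncomp (W : {set V}) (F : mset) : nat :=
  #|[set [set y in W | connect (adj F) x y] | x in W]|.

Definition is_cut (W : {set V}) (F : mset) (x : V) : bool :=
  (x \in W) && (ncomp W F < ncomp (W :\ x) (rm_edges F x)).

Definition is_subgraph (R : mset) (W : {set V}) (F : mset) : Prop :=
  W \subset VX R /\ sub_ms F R /\
  (forall e, 0 < F e -> (ends e).1 \in W /\ (ends e).2 \in W).

Definition no_cut_connected (W : {set V}) (F : mset) : Prop :=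
  connectedX W F /\ forall x, ~~ is_cut W F x.

Definition is_block (R : mset) (W : {set V}) (F : mset) : Prop :=
  is_subgraph R W F /\ no_cut_connected W F /\
  (forall W' F', is_subgraph R W' F' -> no_cut_connected W' F' ->
     W \subset W' -> sub_ms F F' -> W' = W /\ F' = F).

Definition two_blocks_of (R : mset) (v : V)
    (WA : {set V}) (FA : mset) (WB : {set V}) (FB : mset) : Prop :=
  is_block R WA FA /\ is_block R WB FB /\ (WA, FA) <> (WB, FB) /\
  v \in WA /\ v \in WB /\
  (forall W F, is_block R W F -> v \in W -> (W, F) = (WA, FA) \/ (W, F) = (WB, FB)).

Definition exactly_two_blocks (R : mset) (v : V) : Prop :=
  exists WA FA WB FB, two_blocks_of R v WA FA WB FB.

Definition Rv (R : mset) (v : V) : mset :=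
  [ffun e => if incident e v then R e else 0].

Definition odd_set (R : mset) (v : V) : {set V} :=
  [set x | (x != v) && odd (\sum_(e : E) Rv R v e * incident e x)].

Definition perfect_matching (O : {set V}) (M : mset) : Prop :=
  (forall e, M e <= 1) /\
  (forall e, 0 < M e -> [/\ (ends e).1 != (ends e).2, (ends e).1 \in O & (ends e).2 \in O]) /\
  (forall x, x \in O -> \sum_(e : E) M e * incident e x = 1).

Definition extract_a (R : mset) (v : V) (R' : mset) : Prop :=
  exists M, perfect_matching (odd_set R v) M /\ R' = msum (mdiff R (Rv R v)) M.

Definition extraction_applicable (R : mset) (v : V) : Prop :=
  [/\ v \in VX R, balanced R v,
      3 <= #|[set y in VX R | connect (adj R) v y]| &
      ~~ is_cut (VX R) R v \/ (is_cut (VX R) R v /\ exactly_two_blocks R v)].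

Definition extraction_result (R : mset) (v : V) (R' : mset) : Prop :=
  (~~ is_cut (VX R) R v /\ extract_a R v R') \/
  (is_cut (VX R) R v /\
   exists WA FA WB FB, two_blocks_of R v WA FA WB FB /\
   exists (a b : V) (ea eb eab : E),
     (a != v /\ b != v /\ 0 < FA ea /\ links ea a v /\ 0 < FB eb /\
      links eb b v /\ links eab a b) /\
     let R'' := msum (mdiff R (msum (single ea) (single eb))) (single eab) in
     (v \notin VX R'' -> R' = R'') /\ (v \in VX R'' -> extract_a R'' v R')).

Definition metric_instance (w : E -> nat) (R : mset) : Prop :=
  [/\ (exists e, 0 < R e),
      (forall e f u x, links e u x -> links f u x -> w e = w f),
      (forall u x, u != x -> exists e, links e u x) &
      (forall u x y e1 e2 e3, links e1 u y -> links e2 u x -> links e3 x y ->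
         w e1 <= w e2 + w e3)].

End RPP.

(* Main.v *)
Require Import Defs.
From mathcomp Require Import all_boot.
From mathcomp Require Import zify.
From Stdlib Require Import Classical.
Set Implicit Arguments. Unset Strict Implicit. Unset Printing Implicit Defensive.

Section Aux.
Variables (V E : finType) (ends : E -> V * V).
Local Notation mset := {ffun E -> nat}.
Local Notation adj := (adj ends).
Local Notation VX := (VX ends).
Local Notation deg := (deg ends).
Local Notation links := (links ends).
Local Notation incident := (incident ends).
Local Notation balanced := (balanced ends).
Local Notation connectedX := (connectedX ends).
Local Notation eulerian := (eulerian ends).
Local Notation eulerian_extension := (eulerian_extension ends).
Local Notation rm_edges := (rm_edges ends).
Local Notation ncomp := (ncomp ends).
Local Notation is_cut := (is_cut ends).
Local Notation is_subgraph := (is_subgraph ends).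
Local Notation no_cut_connected := (no_cut_connected ends).
Local Notation is_block := (is_block ends).
Local Notation two_blocks_of := (two_blocks_of ends).
Local Notation exactly_two_blocks := (exactly_two_blocks ends).
Local Notation Rv := (Rv ends).
Local Notation odd_set := (odd_set ends).
Local Notation perfect_matching := (perfect_matching ends).
Local Notation extract_a := (extract_a ends).
Local Notation extraction_applicable := (extraction_applicable ends).
Local Notation extraction_result := (extraction_result ends).
Local Notation metric_instance := (metric_instance ends).

Lemma links_sym e x y : links e x y = links e y x.
Proof. by rewrite /Defs.links orbC. Qed.

Lemma adj_sym (X : mset) : symmetric (adj X).
Proof.
move=> x y; apply/existsP/existsP => -[e /andP[h1 h2]]; exists e;
  by rewrite h1 links_sym.
Qed.

Lemma csym (X : mset) : connect_sym (adj X).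
Proof. exact/sym_connect_sym/adj_sym. Qed.

Lemma linksE e x y : links e x y -> (ends e = (x, y)) \/ (ends e = (y, x)).
Proof. by case/orP => /eqP h; [left|right]. Qed.

Lemma links_inc e x y : links e x y -> incident e x /\ incident e y.
Proof.
case/linksE; rewrite /Defs.incident => ->; by rewrite !eqxx ?orbT.
Qed.

Lemma inc_links e x y : incident e x -> incident e y -> x != y -> links e x y.
Proof.
rewrite /Defs.incident /Defs.links; case: (ends e) => p q /=.
by move=> /orP [] /eqP -> /orP [] /eqP ->; rewrite ?eqxx ?orbT.
Qed.

Lemma adjP (X : mset) x y : reflect (exists e, 0 < X e /\ links e x y) (adj X x y).
Proof.
apply: (iffP existsP) => -[e]; [case/andP => h1 h2| case => h1 h2]; exists e => //.
by rewrite h1.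
Qed.

Lemma VXP (X : mset) x : reflect (exists e, 0 < X e /\ incident e x) (x \in VX X).
Proof.
rewrite inE; apply: (iffP existsP) => -[e]; [case/andP => h1 h2| case => h1 h2]; exists e => //.
by rewrite h1.
Qed.

Lemma adj_VX (X : mset) x y : adj X x y -> x \in VX X /\ y \in VX X.
Proof.
case/adjP => e [h1 /links_inc [h2 h3]]; split; apply/VXP; by exists e.
Qed.

Lemma connect_VX (X : mset) x y : connect (adj X) x y -> x != y -> x \in VX X /\ y \in VX X.
Proof.
move=> c nxy; split.
- move/connectP: c nxy => [[|z p] /= pth ->]; first by rewrite eqxx.
  by case/andP: pth => /adj_VX [].
- rewrite csym in c; move/connectP: c nxy => [[|z p] /= pth ->]; first by rewrite eqxx.
  by case/andP: pth => /adj_VX [].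
Qed.

Lemma adj_mono (X Y : mset) : sub_ms X Y -> forall x y, adj X x y -> adj Y x y.
Proof.
move=> s x y /adjP [e [h1 h2]]; apply/adjP; exists e; split => //.
exact: leq_trans h1 (s e).
Qed.

Lemma connect_mono (X Y : mset) : sub_ms X Y -> forall x y, connect (adj X) x y -> connect (adj Y) x y.
Proof.
move=> s; apply: connect_sub => x y h; apply: connect1; exact: adj_mono h.
Qed.

Lemma VX_mono (X Y : mset) : sub_ms X Y -> VX X \subset VX Y.
Proof.
move=> s; apply/subsetP => x /VXP [e [h1 h2]]; apply/VXP; exists e; split=> //.
exact: leq_trans h1 (s e).
Qed.

Lemma connect_lift (e e' : rel V) (f : V -> V) :
  (forall x y, e x y -> connect e' (f x) (f y)) ->
  forall x y, connect e x y -> connect e' (f x) (f y).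
Proof.
move=> h x y /connectP [p pth ->]; elim: p x pth => [|z p IH] x /=; first by rewrite connect0.
case/andP => exz pth; apply: connect_trans (h _ _ exz) (IH _ pth).
Qed.

Lemma connect_pres (e : rel V) (P : V -> Prop) :
  (forall x y, e x y -> P x -> P y) ->
  forall x y, connect e x y -> P x -> P y.
Proof.
move=> h x y /connectP [p pth ->]; elim: p x pth => [|z p IH] x //=.
case/andP => exz pth Px; apply: IH pth (h _ _ exz Px).
Qed.


Lemma conn_lift (X Y : mset) v (Ns : {set V}) :
  (forall e x y, 0 < X e -> links e x y -> x != v -> y != v -> connect (adj Y) x y) ->
  (forall e z, 0 < X e -> links e v z -> z != v -> z \in Ns) ->
  (forall x y, x \in Ns -> y \in Ns -> connect (adj Y) x y) ->
  forall x y, x != v -> y != v -> connect (adj X) x y -> connect (adj Y) x y.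
Proof.
move=> H1 H2 H3 x y xv yv c.
pose f z := if z == v then odflt v [pick n in Ns] else z.
suff: connect (adj Y) (f x) (f y) by rewrite /f (negbTE xv) (negbTE yv).
apply: (connect_lift (e:=adj X)) c => p q /adjP [e [Xe lk]].
rewrite /f; case: (eqVneq p v) => [pv|pv]; case: (eqVneq q v) => [qv|qv].
- exact: connect0.
- subst p; have qN := H2 e q Xe lk qv.
  case: pickP => [n nN|/(_ q)]; [exact: H3| by rewrite qN].
- subst q; rewrite links_sym in lk; have pN := H2 e p Xe lk pv.
  case: pickP => [n nN|/(_ p)]; [exact: H3| by rewrite pN].
- exact: H1 lk pv qv.
Qed.

Lemma sum_single (e0 : E) (F : E -> nat) : \sum_(e : E) single e0 e * F e = F e0.
Proof.
rewrite (bigD1 e0) //= big1 ?addn0; first by rewrite ffunE eqxx mul1n.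
by move=> e /negbTE ne; rewrite ffunE ne mul0n.
Qed.

Lemma sum_msum (X Y : mset) (F : E -> nat) :
  \sum_(e : E) msum X Y e * F e = \sum_(e : E) X e * F e + \sum_(e : E) Y e * F e.
Proof. by rewrite -big_split; apply: eq_bigr => e _; rewrite ffunE mulnDl. Qed.

Lemma msum_mdiff (X Y : mset) : sub_ms Y X -> msum (mdiff X Y) Y = X.
Proof. by move=> s; apply/ffunP => e; rewrite !ffunE subnK. Qed.

Lemma deg_msum (X Y : mset) x : deg (msum X Y) x = deg X x + deg Y x.
Proof. exact: sum_msum. Qed.
Lemma weight_msum (w : E -> nat) (X Y : mset) : weight w (msum X Y) = weight w X + weight w Y.
Proof. exact: sum_msum. Qed.
Lemma card_msum (X Y : mset) : card_ms (msum X Y) = card_ms X + card_ms Y.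
Proof.
rewrite /card_ms -big_split; by apply: eq_bigr => e _; rewrite ffunE.
Qed.
Lemma deg_single (e0 : E) x : deg (single e0) x = ((ends e0).1 == x) + ((ends e0).2 == x).
Proof. exact: sum_single. Qed.
Lemma weight_single (w : E -> nat) (e0 : E) : weight w (single e0) = w e0.
Proof. exact: sum_single. Qed.
Lemma card_single (e0 : E) : card_ms (single e0) = 1.
Proof.
rewrite /card_ms (bigD1 e0) //= big1 ?ffunE ?eqxx // => e /negbTE ne.
by rewrite ffunE ne.
Qed.

Lemma deg0 (X : mset) x : x \notin VX X -> deg X x = 0.
Proof.
move=> nx; apply: big1 => e _.
case: (posnP (X e)) => [->//|Xp].
have: ~~ incident e x by apply: contra nx => i; apply/VXP; exists e.
by rewrite /Defs.incident negb_or => /andP [h1 h2]; rewrite ![_ == x]eq_sym (negbTE h1) (negbTE h2) muln0.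
Qed.

Lemma rm_sub (F : mset) v : sub_ms (rm_edges F v) F.
Proof. by move=> e; rewrite ffunE; case: ifP. Qed.

Lemma fclass_eq (W : {set V}) (F : mset) x y : connect (adj F) x y ->
  [set z in W | connect (adj F) x z] = [set z in W | connect (adj F) y z].
Proof. by move=> c; apply/setP => z; rewrite !inE (same_connect (csym F) c). Qed.

Lemma ncomp_le (W : {set V}) (F : mset) v :
  (forall x y, x \in W :\ v -> y \in W :\ v -> connect (adj F) x y ->
      connect (adj (rm_edges F v)) x y) ->
  ncomp (W :\ v) (rm_edges F v) <= ncomp W F.
Proof.
move=> H; rewrite /ncomp.
set A := W :\ v.
pose f := fun x => [set z in W | connect (adj F) x z].
pose f' := fun x => [set z in A | connect (adj (rm_edges F v)) x z].
pose g (C : {set V}) := f' (odflt v [pick x in A | f x == C]).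
have e1: [set f' x | x in A] = [set g C | C in [set f x | x in A]].
  rewrite -imset_comp; apply: eq_in_imset => x xA /=; rewrite /g.
  case: pickP => [x' /andP [x'A /eqP fx']| /(_ x)]; last by rewrite xA eqxx.
  have xW: x \in W by move: xA; rewrite inE => /andP[].
  have: x \in f x by rewrite inE connect0 andbT.
  rewrite -fx' inE => /andP [_ c].
  by apply: fclass_eq; apply: H => //; rewrite csym.
change (#|[set f' x | x in A]| <= #|[set f x | x in W]|).
rewrite e1 (leq_trans (leq_imset_card _ _)) // subset_leq_card // imsetS //.
exact: subD1set.
Qed.

Lemma nocut_conn (W : {set V}) (F : mset) v x y :
  v \in W -> ~~ is_cut W F v -> x \in W :\ v -> y \in W :\ v ->
  connect (adj F) v x -> connect (adj F) v y -> connect (adj (rm_edges F v)) x y.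
Proof.
move=> vW nc xA yA cx cy.
have le: ncomp (W :\ v) (rm_edges F v) <= ncomp W F by move: nc; rewrite /is_cut vW /= -leqNgt.
move: le; rewrite /ncomp.
set A := W :\ v.
pose f := fun x => [set z in W | connect (adj F) x z].
pose f' := fun x => [set z in A | connect (adj (rm_edges F v)) x z].
change (#|[set f' x | x in A]| <= #|[set f x | x in W]| -> connect (adj (rm_edges F v)) x y).
pose g (C : {set V}) := f (odflt v [pick z in C]).
have pw: forall z, z \in A -> g (f' z) = f z.
  move=> z zA; rewrite /g; case: pickP => [z' /setIdP [z'A c]| /(_ z)]; last by rewrite inE zA connect0.
  by apply/esym/fclass_eq; apply: connect_mono c; apply: rm_sub.
have e2: [set f x | x in W] = [set g C | C in [set f' x | x in A]].
  rewrite -imset_comp; transitivity [set f x | x in A]; last first.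
    by apply: eq_in_imset => z zA /=; rewrite pw.
  apply/setP => C; apply/imsetP/imsetP => -[z zW ->].
    case: (eqVneq z v) => [->|zv]; first by exists x => //; apply: fclass_eq.
    by exists z => //; rewrite !inE zv.
  by exists z => //; move: zW; rewrite inE => /andP[].
rewrite e2 => le.
have inj: {in [set f' x | x in A] &, injective g}.
  by apply/imset_injP; rewrite eqn_leq leq_imset_card.
have fxy: f' x = f' y.
  apply: inj; try exact: imset_f.
  rewrite !pw //; apply: fclass_eq; apply: connect_trans cy.
  by rewrite csym.
have: y \in f' y by rewrite inE yA connect0.
by rewrite -fxy inE => /andP [].
Qed.

Lemma links_conn (X : mset) e p q : links e p q ->
  connect (adj X) (ends e).1 (ends e).2 -> connect (adj X) p q.
Proof. by case/linksE => ->; rewrite // csym. Qed.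

Lemma msum_mono (X Y S : mset) : sub_ms X Y -> sub_ms (msum X S) (msum Y S).
Proof. by move=> s e; rewrite !ffunE leq_add2r. Qed.

Lemma msum_subl (X S : mset) : sub_ms X (msum X S).
Proof. by move=> e; rewrite ffunE leq_addr. Qed.
Lemma msum_subr (X S : mset) : sub_ms S (msum X S).
Proof. by move=> e; rewrite ffunE leq_addl. Qed.

Lemma msum0 (X : mset) : msum X [ffun _ => 0] = X.
Proof. by apply/ffunP => e; rewrite !ffunE addn0. Qed.

Lemma VX_msum (X Y : mset) : VX (msum X Y) = VX X :|: VX Y.
Proof.
apply/setP => x; rewrite in_setU; apply/VXP/orP.
- case=> e []; rewrite ffunE addn_gt0 => /orP [h|h] i; [left|right]; apply/VXP; by exists e.
- by case=> /VXP [e [h i]]; exists e; rewrite ffunE addn_gt0 h ?orbT.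
Qed.

Lemma main_props (R R' : mset) v :
  v \in VX R -> balanced R v ->
  VX R' = VX R :\ v ->
  (forall x, x != v -> odd (deg R' x) = odd (deg R x)) ->
  sub_ms (rm_edges R v) R' ->
  (forall x y, x != v -> y != v -> connect (adj R) v x -> connect (adj R) v y ->
      connect (adj R') x y) ->
  (forall e, 0 < R' e -> connect (adj R) (ends e).1 (ends e).2) ->
  (exists n0, n0 != v /\ connect (adj R) v n0) ->
  [/\ (forall x, x \in VX R' -> balanced R' x = balanced R x),
      (forall x y, x \in VX R' -> y \in VX R' ->
         connect (adj R') x y = connect (adj R) x y) &
      (forall S : mset, VX S \subset VX R' ->
         (eulerian_extension R' S <-> eulerian_extension R S))].
Proof.
move=> hv hb h2 h3 h5 h6 h7 [n0 [n0v cn0]].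
have inR' x : x \in VX R' -> x != v /\ x \in VX R.
  by rewrite h2 in_setD1 => /andP [].
have CL1 (S : mset) x y : connect (adj (msum R' S)) x y -> connect (adj (msum R S)) x y.
  apply: connect_sub => p q /adjP [e []]; rewrite ffunE addn_gt0 => /orP [h|h] lk.
  - apply: links_conn lk _; apply: connect_mono (h7 e h); exact: msum_subl.
  - by apply: connect1; apply/adjP; exists e; rewrite ffunE addn_gt0 h orbT.
have CL2 (S : mset) x y : (forall e, 0 < S e -> ~~ incident e v) -> x != v -> y != v ->
    connect (adj (msum R S)) x y -> connect (adj (msum R' S)) x y.
  move=> hS; apply: (conn_lift (Ns := [set z | (z != v) && connect (adj R) v z])).
  - move=> e p q Xe lk pv qv; apply: connect1; apply/adjP; exists e; split => //.
    have ni: ~~ incident e v.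
      case/linksE: lk; rewrite /Defs.incident => ->; by rewrite /= negb_or ![v == _]eq_sym pv qv.
    apply: leq_trans Xe _; rewrite !ffunE leq_add2r.
    by have := h5 e; rewrite ffunE (negbTE ni).
  - move=> e z; rewrite ffunE addn_gt0 => /orP [h|h] lk zv.
    + by rewrite inE zv; apply: connect1; apply/adjP; exists e.
    + by have := hS e h; case: (links_inc lk) => ->.
  - move=> p q; rewrite !inE => /andP [pv cp] /andP [qv cq].
    by apply: connect_mono (h6 _ _ pv qv cp cq); apply: msum_subl.
split.
- by move=> x /inR' [xv _]; rewrite /balanced h3.
- move=> x y /inR' [xv _] /inR' [yv _]; apply/idP/idP.
  + by move=> c; have := CL1 [ffun _ => 0] x y; rewrite !msum0; apply.
  + move=> c; have := CL2 [ffun _ => 0] x y; rewrite !msum0; apply=> //.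
    by move=> e; rewrite ffunE.
- move=> S sS.
  have vS: v \notin VX S by apply: contraT; rewrite negbK => /(subsetP sS) /inR' [/eqP].
  have hS e : 0 < S e -> ~~ incident e v by move=> Se; apply: contra vS => i; apply/VXP; exists e.
  have VR': VX (msum R' S) = VX R' by rewrite VX_msum; apply/setUidPl.
  have VR: VX (msum R S) = VX R.
    rewrite VX_msum; apply/setUidPl; apply: subset_trans sS _; rewrite h2; exact: subD1set.
  rewrite /eulerian_extension /eulerian /connectedX VR VR'.
  split => -[conn bal].
  + split.
    * have cz z : z \in VX R -> connect (adj (msum R S)) n0 z.
        move=> zR; case: (eqVneq z v) => [->|zv].
          by rewrite csym; apply: connect_mono cn0; apply: msum_subl.
        apply: CL1; apply: conn; last by rewrite h2 in_setD1 zv.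
        rewrite h2 in_setD1 n0v; have nv: v != n0 by rewrite eq_sym.
        exact: (connect_VX cn0 nv).2.
      move=> x y xR yR; apply: connect_trans (cz _ yR); rewrite csym; exact: cz.
    * move=> x xR; rewrite /balanced deg_msum.
      case: (eqVneq x v) => [->|xv]; first by rewrite (deg0 vS) addn0.
      have xR': x \in VX R' by rewrite h2 in_setD1 xv.
      by have := bal x xR'; rewrite /balanced deg_msum oddD h3 // oddD.
  + split.
    * move=> x y /inR' [xv xR] /inR' [yv yR]; apply: CL2 => //; exact: conn.
    * move=> x xR'; have [xv xR] := inR' x xR'.
      by have := bal x xR; rewrite /balanced !deg_msum !oddD h3.
Qed.

Lemma links_self e : links e (ends e).1 (ends e).2.
Proof. by rewrite /Defs.links -surjective_pairing eqxx. Qed.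

Lemma RvP (R0 : mset) v e : 0 < Rv R0 v e -> 0 < R0 e /\ incident e v.
Proof. by rewrite ffunE; case: ifP. Qed.

Lemma mdiff_Rv (R0 : mset) v : mdiff R0 (Rv R0 v) = rm_edges R0 v.
Proof. by apply/ffunP => e; rewrite !ffunE; case: ifP => _; rewrite ?subnn ?subn0. Qed.

Lemma split_Rv (R0 : mset) v : msum (rm_edges R0 v) (Rv R0 v) = R0.
Proof. by apply/ffunP => e; rewrite !ffunE; case: ifP => _; rewrite ?add0n ?addn0. Qed.

Lemma ends_inc_ne e x : (ends e).1 != (ends e).2 ->
  ((ends e).1 == x) + ((ends e).2 == x) = incident e x.
Proof.
rewrite /Defs.incident; case: (ends e) => p q /= npq.
rewrite ![_ == x]eq_sym; case: (eqVneq x p) => [xp|xp]; case: (eqVneq x q) => [xq|xq] //=.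
by rewrite -xp -xq eqxx in npq.
Qed.

Lemma ends_inc_v e x v : x != v -> incident e v ->
  ((ends e).1 == x) + ((ends e).2 == x) = incident e x.
Proof.
move=> xv; rewrite /Defs.incident; case: (ends e) => p q /=.
rewrite ![_ == x]eq_sym; case: (eqVneq x p) => [xp|xp]; case: (eqVneq x q) => [xq|xq] //=.
by rewrite -xp -xq orbb eq_sym (negbTE xv).
Qed.

Lemma oddset_edge (R0 : mset) v x : x \in odd_set R0 v ->
  x != v /\ exists e, 0 < Rv R0 v e /\ links e x v.
Proof.
rewrite inE => /andP [xv od]; split => //.
case: (boolP [exists e, (0 < Rv R0 v e) && links e x v]) => [/existsP [e /andP [h1 h2]]|ne].
  by exists e.
move: od; rewrite big1 // => e _.
case: (posnP (Rv R0 v e)) => [->|p]; first by rewrite mul0n.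
case: (boolP (incident e x)) => [ix|]; last by rewrite muln0.
have [_ iv] := RvP p.
by move: ne; rewrite negb_exists => /forallP /(_ e); rewrite p inc_links.
Qed.

Lemma sum_sub_all (A : {pred E}) (F : E -> nat) : \sum_(e in A) F e <= \sum_(e : E) F e.
Proof.
by rewrite big_mkcond /=; apply: leq_sum => e _; case: ifP.
Qed.

Lemma match_cost (e0 : E) (R0 M : mset) v (c : E -> nat) :
  (forall e f g x y, links e x y -> links f x v -> links g v y -> c e <= c f + c g) ->
  perfect_matching (odd_set R0 v) M ->
  \sum_(e : E) M e * c e <= \sum_(e : E) Rv R0 v e * c e.
Proof.
move=> Hc [M1 [M2 M3]].
set O := odd_set R0 v.
pose phi x := odflt e0 [pick e | (0 < Rv R0 v e) && links e x v].
have phiP x : x \in O -> 0 < Rv R0 v (phi x) /\ links (phi x) x v.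
  move=> /oddset_edge [_ [e [h1 h2]]]; rewrite /phi.
  case: pickP => [e' /andP [] //|/(_ e)]; by rewrite h1 h2.
have phiI : {in O &, injective phi}.
  move=> x y xO yO ph.
  have [xv _] := oddset_edge xO; have [yv _] := oddset_edge yO.
  have [_ l1] := phiP x xO; have [_ l2] := phiP y yO; rewrite ph in l1.
  case/linksE: l1 => h1; case/linksE: l2 => h2; rewrite h1 in h2; case: h2.
  - by move=> ->.
  - by move=> xv' _; rewrite xv' eqxx in xv.
  - by move=> vy _; rewrite vy eqxx in yv.
  - by move=> ->.
apply: (@leq_trans (\sum_(e : E) M e * (c (phi (ends e).1) + c (phi (ends e).2)))).
  apply: leq_sum => e _; case: (posnP (M e)) => [->|p]; first by rewrite !mul0n.
  have [n12 i1 i2] := M2 e p.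
  rewrite leq_mul2l; apply/orP; right; apply: Hc (links_self e) (phiP _ i1).2 _.
  by rewrite links_sym; exact: (phiP _ i2).2.
have E2 : \sum_(e : E) M e * (c (phi (ends e).1) + c (phi (ends e).2)) =
          \sum_(e : E) M e * \sum_(x in O) incident e x * c (phi x).
  apply: eq_bigr => e _; case: (posnP (M e)) => [->|p]; first by rewrite !mul0n.
  have [n12 i1 i2] := M2 e p; congr (_ * _).
  rewrite (bigD1 (ends e).1) //= (bigD1 (ends e).2) /=; last by rewrite i2 eq_sym.
  rewrite big1 ?addn0.
    by rewrite /Defs.incident !eqxx ?orbT !mul1n.
  move=> x /andP [/andP [_ x1] x2].
  by rewrite /Defs.incident (negbTE x1) (negbTE x2).
have E3 : \sum_(e : E) M e * \sum_(x in O) incident e x * c (phi x) =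
          \sum_(x in O) c (phi x).
  rewrite (eq_bigr (fun e => \sum_(x in O) M e * (incident e x * c (phi x)))); last first.
    by move=> e _; rewrite big_distrr.
  rewrite exchange_big /=; apply: eq_bigr => x xO.
  rewrite -[RHS]mul1n -(M3 x xO) big_distrl /=; apply: eq_bigr => e _.
  by rewrite mulnA.
rewrite E2 E3 -(big_imset _ phiI) /=.
apply: leq_trans (sum_sub_all _ _).
apply: leq_sum => e /imsetP [x xO ->].
have [p _] := phiP x xO.
by rewrite -{1}[c (phi x)]mul1n leq_mul2r p orbT.
Qed.

Definition step_props (w : E -> nat) (R0 R1 : mset) v :=
 [/\ weight w R1 <= weight w R0 /\ card_ms R1 <= card_ms R0,
     (forall x, x != v -> odd (deg R1 x) = odd (deg R0 x)),
     sub_ms (rm_edges R0 v) R1,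
     VX R1 \subset VX R0 :\ v &
     (forall e, 0 < R1 e -> connect (adj R0) (ends e).1 (ends e).2)].

Lemma a_step (w : E -> nat) (e0 : E) (R0 M : mset) v :
  (forall u x y e1 e2 e3, links e1 u y -> links e2 u x -> links e3 x y -> w e1 <= w e2 + w e3) ->
  perfect_matching (odd_set R0 v) M ->
  step_props w R0 (msum (mdiff R0 (Rv R0 v)) M) v.
Proof.
move=> tri pm; have pm' := pm; case: pm' => [M1 [M2 M3]].
rewrite mdiff_Rv.
have Rsplit := split_Rv R0 v.
have adjO x : x \in odd_set R0 v -> adj R0 x v.
  case/oddset_edge => _ [e' [p l]]; apply/adjP; exists e'; split => //; exact: (RvP p).1.
split.
- split.
  + rewrite -{2}Rsplit !weight_msum leq_add2l /weight.
    apply: (match_cost e0 _ pm) => e f g x y l1 l2 l3; exact: tri l1 l2 l3.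
  + rewrite -{2}Rsplit !card_msum leq_add2l.
    have h := @match_cost e0 R0 M v (fun _ => 1) (fun _ _ _ _ _ _ _ _ => isT) pm.
    move: h; rewrite /card_ms; under eq_bigr do rewrite muln1.
    by under [X in _ <= X -> _]eq_bigr do rewrite muln1.
- move=> x xv; rewrite !deg_msum -{2}Rsplit deg_msum !oddD; congr (_ (+) _).
  have dRv: deg (Rv R0 v) x = \sum_(e : E) Rv R0 v e * incident e x.
    apply: eq_bigr => e _; case: (posnP (Rv R0 v e)) => [->|p]; first by rewrite !mul0n.
    by rewrite (ends_inc_v xv (RvP p).2).
  have dM: deg M x = \sum_(e : E) M e * incident e x.
    apply: eq_bigr => e _; case: (posnP (M e)) => [->|p]; first by rewrite !mul0n.
    by have [n12 _ _] := M2 e p; rewrite (ends_inc_ne x n12).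
  case: (boolP (x \in odd_set R0 v)) => xO.
  + rewrite dM M3 // dRv; move: xO; rewrite inE => /andP [_ ->] //.
  + have ->: deg M x = 0.
      rewrite dM; apply: big1 => e _; case: (posnP (M e)) => [->|p]; first by rewrite mul0n.
      have [_ i1 i2] := M2 e p; case: (boolP (incident e x)) => [|]; last by rewrite muln0.
      by rewrite /Defs.incident => /orP [] /eqP xe; rewrite -xe in i1 i2; rewrite ?i1 ?i2 in xO.
    by move: xO; rewrite dRv inE xv /= => /negbTE ->.
- exact: msum_subl.
- apply/subsetP => x /VXP [e [p i]]; rewrite in_setD1.
  move: p; rewrite ffunE addn_gt0 => /orP [p|p].
  + move: p; rewrite ffunE; case: ifP => // niv p.
    apply/andP; split.
      by apply/negP => /eqP xv; rewrite -xv i in niv.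
    by apply/VXP; exists e.
  + have [_ i1 i2] := M2 e p.
    have xO: x \in odd_set R0 v by move: i; rewrite /Defs.incident => /orP [] /eqP ->.
    have [xv _] := oddset_edge xO; rewrite xv /=.
    by case: (adj_VX (adjO x xO)).
- move=> e; rewrite ffunE addn_gt0 => /orP [p|p].
  + apply: connect1; apply/adjP; exists e; split; last exact: links_self.
    exact: leq_trans p (rm_sub _ _ _).
  + have [_ i1 i2] := M2 e p.
    apply: connect_trans (connect1 (adjO _ i1)) _.
    by apply: connect1; rewrite adj_sym; apply: adjO.
Qed.

Definition concl (w : E -> nat) (R : mset) v (R' : mset) :=
  [/\ VX R' = VX R :\ v,
      weight w R' <= weight w R /\ card_ms R' <= card_ms R,
      (forall x, x \in VX R' -> balanced R' x = balanced R x),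
      (forall x y, x \in VX R' -> y \in VX R' ->
         connect (adj R') x y = connect (adj R) x y) &
      (forall S : mset, VX S \subset VX R' ->
         (eulerian_extension R' S <-> eulerian_extension R S))].

Lemma finish (w : E -> nat) (R R' : mset) v :
  v \in VX R -> balanced R v ->
  VX R' = VX R :\ v ->
  weight w R' <= weight w R /\ card_ms R' <= card_ms R ->
  (forall x, x != v -> odd (deg R' x) = odd (deg R x)) ->
  sub_ms (rm_edges R v) R' ->
  (forall x y, x != v -> y != v -> connect (adj R) v x -> connect (adj R) v y ->
      connect (adj R') x y) ->
  (forall e, 0 < R' e -> connect (adj R) (ends e).1 (ends e).2) ->
  (exists n0, n0 != v /\ connect (adj R) v n0) ->
  concl w R v R'.
Proof.
move=> hv hb h2 hw h3 h5 h6 h7 h8.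
by have [p1 p2 p3] := main_props hv hb h2 h3 h5 h6 h7 h8; split.
Qed.

Lemma three (S : {set V}) : 2 < #|S| -> forall p q, exists y, [/\ y \in S, y != p & y != q].
Proof.
move=> h p q.
case: (boolP [exists y, [&& y \in S, y != p & y != q]]) => [/existsP [y /and3P [h1 h2 h3]]|ne].
  by exists y.
have: S \subset [set p; q].
  apply/subsetP => y yS; rewrite !inE; move: ne; rewrite negb_exists => /forallP /(_ y).
  by rewrite yS /= negb_and !negbK.
move/subset_leq_card; rewrite cards2 => le.
by have := leq_trans h le; case: (p != q).
Qed.

Lemma conn_v (R : mset) v x : connect (adj R) v x -> x != v -> x \in VX R :\ v.
Proof. by move=> c xv; rewrite in_setD1 xv; have := connect_VX c; rewrite eq_sym => /(_ xv) []. Qed.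

Lemma case_a (w : E -> nat) (R : mset) v (R' : mset) :
  metric_instance w R -> v \in VX R -> balanced R v ->
  3 <= #|[set y in VX R | connect (adj R) v y]| -> ~~ is_cut (VX R) R v ->
  extract_a R v R' -> concl w R v R'.
Proof.
move=> [[e0 _] _ _ tri] hv hb h3 nc [M [pm ->]].
have [wc par sub vsub conn] := @a_step w e0 R M v tri pm.
set R1 := msum _ M in wc par sub vsub conn *.
have h6 x y : x != v -> y != v -> connect (adj R) v x -> connect (adj R) v y ->
    connect (adj (rm_edges R v)) x y.
  move=> xv yv cx cy; exact: (nocut_conn hv nc (conn_v cx xv) (conn_v cy yv) cx cy).
apply: finish => //.
- apply/eqP; rewrite eqEsubset vsub /=; apply/subsetP => x; rewrite in_setD1 => /andP [xv xR].
  case: (boolP (x \in VX (rm_edges R v))) => xrm; first exact: (subsetP (VX_mono sub)).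
  exfalso; case/VXP: xR => e [Re ie].
  have iv: incident e v.
    apply: contraNT xrm => niv; apply/VXP; exists e; by rewrite ffunE (negbTE niv).
  have cx: connect (adj R) v x.
    by apply: connect1; apply/adjP; exists e; split => //; rewrite links_sym inc_links.
  have [y [yS yv yx]] := three h3 v x.
  move: yS; rewrite inE => /andP [yR cy].
  have cxy := h6 x y xv yv cx cy.
  have xy: x != y by rewrite eq_sym.
  by case: (connect_VX cxy xy) => xr _; rewrite xr in xrm.
- move=> x y xv yv cx cy; apply: connect_mono (h6 x y xv yv cx cy); exact: sub.
- have [y [yS yv _]] := three h3 v v.
  by exists y; split => //; move: yS; rewrite inE => /andP [].
Qed.

Lemma conn_v' (W : {set V}) x v : x \in W -> x != v -> x \in W :\ v.
Proof. by move=> xW xv; rewrite in_setD1 xv. Qed.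

Lemma rm_mono (F R : mset) v : sub_ms F R -> sub_ms (rm_edges F v) (rm_edges R v).
Proof. by move=> s e; rewrite !ffunE; case: ifP. Qed.

Lemma sub_trans (X Y Z : mset) : sub_ms X Y -> sub_ms Y Z -> sub_ms X Z.
Proof. by move=> s1 s2 e; exact: leq_trans (s1 e) (s2 e). Qed.

Lemma block_conn (R : mset) W (F : mset) v x y : is_block R W F -> v \in W ->
  x \in W -> y \in W -> x != v -> y != v -> connect (adj (rm_edges R v)) x y.
Proof.
move=> [[sW [sF inW]] [[conn nocut] _]] vW xW yW xv yv.
have c := nocut_conn vW (nocut v) (conn_v' xW xv) (conn_v' yW yv) (conn v x vW xW) (conn v y vW yW).
exact: connect_mono (rm_mono v sF) _ _ c.
Qed.

Lemma card_ms_le (F R : mset) : sub_ms F R -> card_ms F <= card_ms R.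
Proof. by move=> s; apply: leq_sum => e _; exact: s. Qed.

Lemma card_ms_lt (F R : mset) : sub_ms F R -> F <> R -> card_ms F < card_ms R.
Proof.
move=> s neq.
case: (boolP [exists e, F e != R e]) => [/existsP [e ne]|]; last first.
  rewrite negb_exists => /forallP h; exfalso; apply: neq; apply/ffunP => e.
  by have := h e; rewrite negbK => /eqP.
rewrite /card_ms (bigD1 e) //= [X in _ < X](bigD1 e) //= -addSn.
apply: leq_add; first by rewrite ltn_neqAle ne s.
by apply: leq_sum => f _; exact: s.
Qed.

Lemma block_exists (R : mset) v u e : 0 < R e -> links e v u -> u != v ->
  exists W F, [/\ is_block R W F, v \in W & u \in W].
Proof.
move=> Re lk uv.
pose B := #|V| + card_ms R.
suff IH: forall n (W : {set V}) (F : mset), B - (#|W| + card_ms F) <= n -> is_subgraph R W F ->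
    no_cut_connected W F -> v \in W -> u \in W -> exists W F, [/\ is_block R W F, v \in W & u \in W].
  have [iv iu] := links_inc lk.
  have vu : v != u by rewrite eq_sym.
  apply: (IH B [set v; u] (single e)); first exact: leq_subr.
  - split; last split.
    + apply/subsetP => x; rewrite in_set2 => /orP [] /eqP ->; apply/VXP; by exists e.
    + by move=> f; rewrite ffunE; case: eqP => // ->.
    + move=> f; rewrite ffunE; case: eqP => // -> _.
      by case/linksE: lk => ->; rewrite !inE !eqxx ?orbT.
  - split.
    + move=> x y; rewrite !inE => /orP [] /eqP -> /orP [] /eqP ->; rewrite ?connect0 //;
        apply: connect1; apply/adjP; exists e; rewrite ffunE eqxx; split => //.
      by rewrite links_sym.
    + move=> x; rewrite /is_cut; case: (boolP (x \in [set v; u])) => //= xW.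
      rewrite -leqNgt /ncomp.
      apply: leq_trans (leq_imset_card _ _) _.
      have: #|[set v; u] :\ x| <= 1.
        by have := cardsD1 x [set v; u]; rewrite xW cards2 vu => /eqP; rewrite eqSS => /eqP <-.
      move/leq_trans; apply; apply/card_gt0P; exists [set z in [set v; u] | connect (adj (single e)) v z].
      by apply: imset_f; rewrite !inE eqxx.
  - by rewrite !inE eqxx.
  - by rewrite !inE eqxx orbT.
have grow : forall (W : {set V}) (F : mset), is_subgraph R W F -> no_cut_connected W F ->
    ~ is_block R W F -> exists W' F', [/\ is_subgraph R W' F', no_cut_connected W' F',
        W \subset W', #|W| + card_ms F < #|W'| + card_ms F' & #|W'| + card_ms F' <= B].
  move=> W F sg nc nb.
  have [W' [F' [s' n' sw sf neq]]] : exists W' F', [/\ is_subgraph R W' F', no_cut_connected W' F',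
        W \subset W', sub_ms F F' & ~ (W' = W /\ F' = F)].
    apply: NNPP => H; apply: nb; split => //; split => //.
    move=> W' F' a b c d; apply: NNPP => ne; apply: H; exists W', F'; split => //.
  exists W', F'; split => //.
  - case: (eqVneq W' W) => [eW|nW].
    + have nF: F <> F' by move=> eF; apply: neq; split.
      rewrite eW ltn_add2l; exact: card_ms_lt.
    + rewrite -addSn; apply: leq_add; last exact: card_ms_le.
      by apply: proper_card; rewrite properEneq eq_sym nW sw.
  - apply: leq_add; first exact: max_card.
    by case: s' => _ [s _]; exact: card_ms_le.
elim=> [|n IHn] W F hn sg nc vW uW.
- case: (classic (is_block R W F)) => [b|nb]; first by exists W, F.
  have [W' [F' [_ _ _ lt le]]] := grow W F sg nc nb.
  by move: hn; rewrite /B in le *; lia.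
- case: (classic (is_block R W F)) => [b|nb]; first by exists W, F.
  have [W' [F' [s' n' sw lt le]]] := grow W F sg nc nb.
  apply: (IHn W' F') => //; try exact: (subsetP sw).
  by move: hn; rewrite /B in le *; lia.
Qed.

Lemma links_vinj e x y v : links e x v -> links e y v -> x != v -> x = y.
Proof.
move=> l1 l2 xv; case/linksE: l1 => h1; case/linksE: l2 => h2; rewrite h1 in h2; case: h2.
- by move=> ->.
- by move=> xv' _; rewrite xv' eqxx in xv.
- by move=> _ vx; rewrite vx eqxx in xv.
- by move=> ->.
Qed.

Lemma block_end (R : mset) W (F : mset) e a v : is_block R W F -> 0 < F e -> links e a v -> a \in W.
Proof.
move=> [[_ [_ inW]] _] Fe lk; have [h1 h2] := inW e Fe.
by case/linksE: lk => h; rewrite h in h1 h2.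
Qed.

Lemma b_reach (R : mset) v WA FA WB FB a b ea eb :
  two_blocks_of R v WA FA WB FB ->
  0 < FA ea -> links ea a v -> a != v ->
  0 < FB eb -> links eb b v -> b != v ->
  forall x, x != v -> connect (adj R) v x ->
    connect (adj (rm_edges R v)) a x \/ connect (adj (rm_edges R v)) b x.
Proof.
move=> [bA [bB [_ [vA [vB only]]]]] FAe la av FBe lb bv x xv c.
have aA := block_end bA FAe la; have bB' := block_end bB FBe lb.
suff: x = v \/ connect (adj (rm_edges R v)) a x \/ connect (adj (rm_edges R v)) b x.
  by case=> [xv'|//]; rewrite xv' eqxx in xv.
apply: (connect_pres (e := adj R) (P := fun z => z = v \/ connect (adj (rm_edges R v)) a z \/
   connect (adj (rm_edges R v)) b z)) c _; last by left.
move=> y z /adjP [e [Re lk]] Py.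
case: (eqVneq z v) => [->|zv]; first by left.
right; case: (eqVneq y v) => [yv|yv].
- subst y; have [W [F [bW vW zW]]] := block_exists Re lk zv.
  case: (only W F bW vW) => -[eW _]; rewrite eW in zW.
  + by left; apply: block_conn bA vA aA zW av zv.
  + by right; apply: block_conn bB vB bB' zW bv zv.
- have ni: ~~ incident e v.
    case/linksE: lk; rewrite /Defs.incident => ->; by rewrite /= negb_or ![v == _]eq_sym yv zv.
  have ad : adj (rm_edges R v) y z.
    by apply/adjP; exists e; rewrite ffunE (negbTE ni).
  case: Py => [yv'|[h|h]]; first by rewrite yv' eqxx in yv.
  + by left; apply: connect_trans h (connect1 ad).
  + by right; apply: connect_trans h (connect1 ad).
Qed.

Lemma b_sep (R : mset) v WA FA WB FB a b ea eb :
  is_cut (VX R) R v -> two_blocks_of R v WA FA WB FB ->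
  0 < FA ea -> links ea a v -> a != v ->
  0 < FB eb -> links eb b v -> b != v ->
  ~~ connect (adj (rm_edges R v)) a b.
Proof.
move=> cut tb FAe la av FBe lb bv; apply/negP => cab.
have reach := b_reach tb FAe la av FBe lb bv.
move: cut; rewrite /is_cut => /andP [_]; rewrite ltnNge => /negP; apply.
apply: ncomp_le => x y xW yW; apply: (conn_lift (v := v) (Ns := [set z | (z != v) && connect (adj R) v z])).
- move=> e p q Re lk pv qv; apply: connect1; apply/adjP; exists e; split => //.
  have ni: ~~ incident e v.
    case/linksE: lk; rewrite /Defs.incident => ->; by rewrite /= negb_or ![v == _]eq_sym pv qv.
  by rewrite ffunE (negbTE ni).
- move=> e z Re lk zv; rewrite inE zv /=; apply: connect1; apply/adjP; by exists e.
- have ca z : z \in [set z | (z != v) && connect (adj R) v z] -> connect (adj (rm_edges R v)) a z.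
    rewrite inE => /andP [zv cz]; case: (reach z zv cz) => // h; exact: connect_trans cab h.
  move=> p q /ca cp /ca cq; apply: connect_trans cq; by rewrite csym.
- by move: xW; rewrite in_setD1 => /andP [].
- by move: yW; rewrite in_setD1 => /andP [].
Qed.

Lemma deg1 e p q x : links e p q -> ((ends e).1 == x) + ((ends e).2 == x) = (p == x) + (q == x).
Proof. by case/linksE => ->; rewrite //= addnC. Qed.

Lemma case_b (w : E -> nat) (R R' : mset) v WA FA WB FB a b ea eb eab :
  metric_instance w R -> v \in VX R -> balanced R v -> is_cut (VX R) R v ->
  two_blocks_of R v WA FA WB FB ->
  a != v -> b != v -> 0 < FA ea -> links ea a v -> 0 < FB eb -> links eb b v -> links eab a b ->
  let R'' := msum (mdiff R (msum (single ea) (single eb))) (single eab) in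
  (v \notin VX R'' -> R' = R'') -> (v \in VX R'' -> extract_a R'' v R') -> concl w R v R'.
Proof.
move=> [[e0 _] _ _ tri] hv hb cut tb av bv FAe la FBe lb lab R'' h1 h2.
have nab := b_sep cut tb FAe la av FBe lb bv.
have reach := b_reach tb FAe la av FBe lb bv.
have ab : a != b by apply: contraNneq nab => ->; exact: connect0.
have eab_ne : ea != eb.
  apply/negP => /eqP Ee; rewrite Ee in la; move/eqP: ab; apply; exact: links_vinj la lb av.
have [bA [bB _]] := tb.
case: bA => [[_ [sA _]] _]; case: bB => [[_ [sB _]] _].
have Rea: 0 < R ea := leq_trans FAe (sA ea).
have Reb: 0 < R eb := leq_trans FBe (sB eb).
set D := msum (single ea) (single eb).
have sD : sub_ms D R.
  move=> f; rewrite !ffunE; case: (eqVneq f ea) => [->|fa].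
    by rewrite (negbTE eab_ne).
  by case: (eqVneq f eb) => [->|fb].
have RD : R = msum (mdiff R D) D by rewrite msum_mdiff.
have iea: incident ea v := (links_inc la).2.
have ieb: incident eb v := (links_inc lb).2.
have nieab: ~~ incident eab v.
  by case/linksE: lab; rewrite /Defs.incident => ->; rewrite /= negb_or ![v == _]eq_sym av bv.
have degE x : x != v -> deg R'' x = deg R x.
  move=> xv; rewrite /R'' deg_msum [in RHS]RD deg_msum /D deg_msum !deg_single.
  rewrite (deg1 x la) (deg1 x lb) (deg1 x lab) [v == x]eq_sym (negbTE xv) !addn0.
  by rewrite addnA.
have wE : weight w R'' <= weight w R.
  rewrite /R'' weight_msum [in X in _ <= X]RD weight_msum leq_add2l /D weight_msum !weight_single.
  by apply: tri lab la _; rewrite links_sym.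
have cE : card_ms R'' <= card_ms R.
  by rewrite /R'' card_msum [in X in _ <= X]RD card_msum leq_add2l /D card_msum !card_single.
have rmsub : sub_ms (rm_edges R v) (rm_edges R'' v).
  move=> f; rewrite !ffunE; case: ifP => // nif.
  have fa : (f == ea) = false by apply/eqP => fe; rewrite fe iea in nif.
  have fb : (f == eb) = false by apply/eqP => fe; rewrite fe ieb in nif.
  by rewrite /R'' /D ?ffunE fa fb subn0 leq_addr.
have eabR : 0 < rm_edges R'' v eab.
  by rewrite ffunE (negbTE nieab) /R'' /D ?ffunE eqxx addn1.
have VXsub : VX R'' \subset VX R.
  apply/subsetP => x /VXP [e []]; rewrite /R'' !ffunE addn_gt0 => /orP [p|p] ie.
    by apply/VXP; exists e; split => //; move: p; rewrite subn_gt0; apply: leq_trans.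
  move: p; case: eqP => // Ee _; rewrite Ee in ie.
  move: ie; rewrite /Defs.incident; case/linksE: lab => -> /= /orP [] /eqP ->;
   first [by apply/VXP; exists ea; rewrite (links_inc la).1 | by apply/VXP; exists eb; rewrite (links_inc lb).1].
have cav : adj R a v by apply/adjP; exists ea.
have cvb : adj R v b by apply/adjP; exists eb; rewrite links_sym.
have cab : connect (adj R) a b := connect_trans (connect1 cav) (connect1 cvb).
have connR x y : connect (adj R'') x y -> connect (adj R) x y.
  apply: connect_sub => p q /adjP [e []]; rewrite /R'' !ffunE addn_gt0 => /orP [pp|pp] lk.
    apply: connect1; apply/adjP; exists e; split => //; move: pp; rewrite subn_gt0; exact: leq_trans.
  move: pp; case: eqP => // Ee _; rewrite Ee in lk.
  by case/linksE: lk => h; case/linksE: lab; rewrite h => -[-> ->] //; rewrite csym.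
have sp : step_props w R'' R' v.
  case: (boolP (v \in VX R'')) => vR''.
    by have [M [pm ->]] := h2 vR''; exact: (@a_step w e0 R'' M v tri pm).
  rewrite (h1 vR''); split => //.
  - exact: rm_sub.
  - apply/subsetP => x xR; rewrite in_setD1 xR andbT.
    by apply/negP => /eqP xv; rewrite -xv xR in vR''.
  - move=> e p; apply: connect1; apply/adjP; exists e; split => //; exact: links_self.
case: sp => [[wR cR] par sub vsub conn].
have rmR' : sub_ms (rm_edges R v) R' := sub_trans rmsub sub.
have abR' : adj R' a b by apply/adjP; exists eab; split => //; exact: leq_trans eabR (sub eab).
have ca z : z != v -> connect (adj R) v z -> connect (adj R') a z.
  move=> zv cz; case: (reach z zv cz) => h.
    exact: connect_mono rmR' _ _ h.
  by apply: connect_trans (connect1 abR') _; apply: connect_mono rmR' _ _ h.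
apply: finish => //.
- apply/eqP; rewrite eqEsubset; apply/andP; split.
    by apply: subset_trans vsub _; apply: setSD.
  apply/subsetP => x; rewrite in_setD1 => /andP [xv xR].
  case: (boolP (x \in VX (rm_edges R v))) => xrm.
    exact: (subsetP (VX_mono rmR')).
  case/VXP: xR => e [Re ie].
  have iv: incident e v.
    apply: contraNT xrm => niv; apply/VXP; exists e; by rewrite ffunE (negbTE niv).
  have cx: connect (adj R) v x.
    by apply: connect1; apply/adjP; exists e; split => //; rewrite links_sym inc_links.
  have [ia ib] := links_inc lab.
  case: (reach x xv cx) => h.
  + case: (eqVneq x a) => [->|xa].
      by apply/VXP; exists eab; split => //; exact: leq_trans eabR (sub eab).
    have ax : a != x by rewrite eq_sym.
    by case: (connect_VX h ax) => _ xr; rewrite xr in xrm.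
  + case: (eqVneq x b) => [->|xb].
      by apply/VXP; exists eab; split => //; exact: leq_trans eabR (sub eab).
    have bx : b != x by rewrite eq_sym.
    by case: (connect_VX h bx) => _ xr; rewrite xr in xrm.
- by split; [exact: leq_trans wR wE | exact: leq_trans cR cE].
- by move=> x xv; rewrite par // degE.
- move=> x y xv yv cx cy; apply: connect_trans (ca y yv cy); rewrite csym; exact: ca.
- by move=> e p; apply: connR; exact: conn.
- by exists a; split => //; rewrite csym; exact: connect1.
Qed.

End Aux.

Theorem mainTheorem14 (V E : finType) (ends : E -> V * V) (w : E -> nat)
    (R : {ffun E -> nat}) (v : V) (R' : {ffun E -> nat}) :
  metric_instance ends w R ->
  extraction_applicable ends R v ->
  extraction_result ends R v R' ->
  [/\ VX ends R' = VX ends R :\ v,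
      weight w R' <= weight w R /\ card_ms R' <= card_ms R,
      (forall x, x \in VX ends R' -> balanced ends R' x = balanced ends R x),
      (forall x y, x \in VX ends R' -> y \in VX ends R' ->
         connect (adj ends R') x y = connect (adj ends R) x y) &
      (forall S : {ffun E -> nat}, VX ends S \subset VX ends R' ->
         (eulerian_extension ends R' S <-> eulerian_extension ends R S))].
Proof.
move=> met [hv hb h3 _] res.
change (concl ends w R v R').
case: res => [[nc exa] | [cut [WA [FA [WB [FB [tb [a [b [ea [eb [eab [[av [bv [FAe [la [FBe [lb lab]]]]]] [r1 r2]]]]]]]]]]]]]].
- exact: case_a met hv hb h3 nc exa.
- exact: (case_b met hv hb cut tb av bv FAe la FBe lb lab r1 r2).
Qed.
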